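(* For every positive integer $n$, $$\sum_{k=0}^{n-1}\binom{n}{k}^{-2}=\frac{(n+1)!\,(n+1)^2}{(n+\frac{3}{2})!\,4^n}\sum_{j=0}^{n-1}\frac{(3j^3+12j^2+18j+10)\,4^j\,(j+\frac32)!}{(j+1)^2\,(j+1)!\,(j+2)^3}.$$
   Context: Here factorials of non-integers are defined via the Gamma function: $x!:=\Gamma(x+1)$ for all real $x>-1$. *)

(* Defs.v *)
From HB Require Import structures.
From mathcomp Require Import all_boot all_order all_algebra.
From mathcomp Require Import all_classical all_reals all_analysis.
Set Implicit Arguments. Unset Strict Implicit. Unset Printing Implicit Defensive.
Import Order.TTheory GRing.Theory Num.Theory.
Local Open Scope classical_set_scope.
Local Open Scope ring_scope.

Definition Gamma {R : realType} (s : R) : R :=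
  fine (\int[@lebesgue_measure R]_(x in `]0%R, +oo[) ((x `^ (s - 1)) * expR (- x))%:E)%E.

Definition rfact {R : realType} (x : R) : R := Gamma (x + 1).

(* Main.v *)
Require Import Defs.
From HB Require Import structures.
From mathcomp Require Import all_boot all_order all_algebra.
From mathcomp Require Import all_classical all_reals all_analysis.
From mathcomp Require Import measurable_realfun.
From mathcomp Require Import lra ring.
Import Order.TTheory GRing.Theory Num.Theory.
Import numFieldNormedType.Exports.
Local Open Scope classical_set_scope.
Local Open Scope ring_scope.

Section G.
Variable R : realType.
Definition pw (r x : R) := x `^ r * expR (- x).

Lemma pw_ge0 r x : 0 <= pw r x.
Proof. by rewrite /pw mulr_ge0 ?powR_ge0 ?expR_ge0. Qed.

Lemma cont_eN : continuous (fun x : R => expR (- x)).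
Proof.
move=> x; apply: continuous_comp; last exact: continuous_expR.
exact: (@continuousN _ R^o).
Qed.

Lemma pw_cont r x : 0 < x -> {for x, continuous (pw r)}.
Proof.
move=> x0; apply: continuousM; last exact: cont_eN.
apply: differentiable_continuous; apply/derivable1_diffP.
by apply: derivable_powR; rewrite in_itv/= x0.
Qed.

Lemma pw0 r : r != 0 -> pw r 0 = 0.
Proof. by move=> r0; rewrite /pw powR0 ?mul0r. Qed.

Lemma pw_right0 r : 0 < r -> pw r x @[x --> 0^'+] --> pw r 0.
Proof.
move=> r0; rewrite pw0 ?gt_eqF//.
have h := cvgM (powR_cvg0 r0) (cvg_at_right_filter (cont_eN 0)).
by rewrite mul0r in h; exact: h.
Qed.

Lemma pw_derive (s x : R) : 0 < x -> is_derive x 1 (pw s) (s * pw (s-1) x - pw s x).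
Proof.
move=> x0.
have h1 := is_derive1_powR s x0.
have h2 : is_derive x 1 (fun y : R => expR (- y)) (- expR (- x)).
  by apply: is_derive_eq; rewrite mulrN1.
have h3 := is_deriveM h1 h2.
have -> : pw s = ((powR (R:=R))^~ s) * (fun y : R => expR (- y)) by [].
apply: is_derive_eq.
rewrite /pw /= !/GRing.scale /=.
have -> : ((powR (R:=R))^~ s * (fun y : R => expR (- y))) x = x `^ s * expR (- x) by [].
by rewrite mulrN addrC mulrC -mulrA.
Qed.

Lemma invx_cvg0 : (fun x : R => x^-1) @ +oo --> 0.
Proof.
have := @gtr0_cvgV0 R R (pinfty_nbhs R) _ (fun x : R => x).
case.
- by near=> x.
move=> _ /(_ cvg_id); exact.
Unshelve. end_near. Qed.

Lemma pw_cvgy (s : R) : pw s x @[x --> +oo] --> 0.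
Proof.
pose N := Num.truncn s.
pose c : R := (N.+2)`!%:R.
have c0 : 0 < c by rewrite ltr0n fact_gt0.
apply: (@squeeze_cvgr _ _ _ _ (fun=> 0) (fun x => c * x^-1)); last 2 first.
- exact: cvg_cst.
- by rewrite -(mulr0 c); apply: cvgMr; exact: invx_cvg0.
near=> x.
have x1 : 1 <= x by near: x; apply: nbhs_pinfty_ge.
have x0 : 0 < x by apply: lt_le_trans x1.
rewrite pw_ge0 /=.
apply: (@le_trans _ _ (x ^+ N.+1 * expR (- x))).
  rewrite /pw; apply: ler_wpM2r; first exact: expR_ge0.
  rewrite -powR_mulrn; last exact: ltW x0.
  apply: (ler_powR x1); apply: ltW; exact: truncnS_gt.
have := expR_ge1Dxn N.+1 (ltW x0).
rewrite expRN => h.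
have e0 : 0 < expR x by apply: expR_gt0.
rewrite ler_pdivlMr// mulrAC ler_pdivrMr// -exprSr.
rewrite -ler_pdivrMl// mulrC.
by apply: le_trans h; rewrite lerDr ler01.
Unshelve. all: end_near. Qed.
Lemma measurable_pw r : measurable_fun setT (pw r).
Proof.
apply: measurable_funM => //; apply: measurableT_comp => //.
Qed.

Lemma mEpw r (D : set R) : measurable_fun D (EFin \o pw r).
Proof.
apply/measurable_EFinP; apply: measurable_funS (measurable_pw r) => //.
Qed.

Lemma pwS (s x : R) : 0 <= x -> 0 < s -> pw s x = x * pw (s - 1) x.
Proof. by move=> x0 s0; rewrite /pw mulrA mulr_powRB1. Qed.

Local Notation mu := (@lebesgue_measure R).

Lemma Gtail (s : R) : 1 < s ->
  (\int[mu]_(x in `[s, +oo[) (pw s x)%:E =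
   \int[mu]_(x in `[s, +oo[) ((s * pw (s - 1) x)%:E) + (pw s s)%:E)%E.
Proof.
move=> s1; have s0 : 0 < s by apply: lt_trans s1.
pose h x := s * pw (s - 1) x.
have mh : measurable_fun setT h by apply: measurable_funM => //; exact: measurable_pw.
have ch x : 0 < x -> {for x, continuous h}.
  by move=> x0; apply: continuousM; [exact: cst_continuous|exact: pw_cont].
have cd x : 0 < x -> {for x, continuous (fun y => pw s y - h y)}.
  by move=> x0; apply: continuousD; [exact: pw_cont|apply: continuousN; exact: ch].
have md : measurable_fun setT (fun x => pw s x - h x).
  by apply: measurable_funB => //; exact: measurable_pw.
transitivity (\int[mu]_(x in `[s, +oo[) ((h x)%:E + (pw s x - h x)%:E))%E.
  by apply: eq_integral => x _; rewrite -EFinD addrC subrK.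
rewrite ge0_integralD //=; last 4 first.
- by move=> x _; rewrite lee_fin /h mulr_ge0 ?pw_ge0 ?ltW.
- by apply/measurable_EFinP; apply: measurable_funS mh.
- move=> x; rewrite /= in_itv/= andbT => sx.
  have x0 : 0 <= x := le_trans (ltW s0) sx.
  rewrite lee_fin (@pwS s x x0 s0) /h -mulrBl.
  by rewrite mulr_ge0 ?pw_ge0// subr_ge0.
- by apply/measurable_EFinP; apply: measurable_funS md.
congr (_ + _)%E.
rewrite (@ge0_continuous_FTC2y _ (fun x => pw s x - h x) (fun x => - pw s x) s 0).
- by rewrite sub0e EFinN oppeK.
- move=> x sx.
  have x0 : 0 <= x := le_trans (ltW s0) sx.
  rewrite (@pwS s x x0 s0) /h -mulrBl.
  by rewrite mulr_ge0 ?pw_ge0// subr_ge0.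
- apply/continuous_within_itvcyP; split.
    by move=> x; rewrite in_itv/= andbT => sx; apply: cd; apply: lt_trans sx.
  by apply: cvg_at_right_filter; apply: cd.
- by rewrite -oppr0; apply: cvgN; exact: pw_cvgy.
- move=> x sx; apply: derivableN.
  by have [] := @pw_derive s x (lt_trans s0 sx).
- apply: cvg_at_right_filter; apply: continuousN; exact: pw_cont.
- move=> x; rewrite in_itv/= andbT => sx.
  rewrite derive1E deriveN; last by have [] := @pw_derive s x (lt_trans s0 sx).
  by case: (@pw_derive s x (lt_trans s0 sx)) => _ ->; rewrite opprB.
Qed.
Lemma Ghead (s : R) : 1 < s ->
  (\int[mu]_(x in `[0%R, s]) ((s * pw (s - 1) x)%:E) =
   \int[mu]_(x in `[0%R, s]) (pw s x)%:E + (pw s s)%:E)%E.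
Proof.
move=> s1; have s0 : 0 < s by apply: lt_trans s1.
have s10 : 0 < s - 1 by rewrite subr_gt0.
pose h x := s * pw (s - 1) x.
have mh : measurable_fun setT h by apply: measurable_funM => //; exact: measurable_pw.
have md : measurable_fun setT (fun x => h x - pw s x).
  by apply: measurable_funB => //; exact: measurable_pw.
have ch x : 0 < x -> {for x, continuous h}.
  by move=> x0; apply: continuousM; [exact: cst_continuous|exact: pw_cont].
have cd x : 0 < x -> {for x, continuous (fun y => h y - pw s y)}.
  by move=> x0; apply: continuousD; [exact: ch|apply: continuousN; exact: pw_cont].
transitivity (\int[mu]_(x in `[0%R, s]) ((pw s x)%:E + (h x - pw s x)%:E))%E.
  by apply: eq_integral => x _; rewrite -EFinD addrCA subrr addr0.
rewrite ge0_integralD //=; last 4 first.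
- by move=> x _; rewrite lee_fin pw_ge0.
- exact: mEpw.
- move=> x; rewrite /= in_itv/= => /andP[x0 xs].
  rewrite lee_fin (@pwS s x x0 s0) /h -mulrBl.
  by rewrite mulr_ge0 ?pw_ge0// subr_ge0.
- by apply/measurable_EFinP; apply: measurable_funS md.
congr (_ + _)%E.
rewrite (@continuous_FTC2 _ (fun x => h x - pw s x) (pw s) 0 s s0).
- by rewrite pw0 ?gt_eqF// sube0.
- apply/(continuous_within_itvP _ s0); split.
  + by move=> x; rewrite in_itv/= => /andP[x0 _]; apply: cd.
  + apply: cvgB; last exact: pw_right0.
    by apply: cvgM; [exact: cvg_cst|exact: pw_right0].
  + by apply: cvg_at_left_filter; apply: cd.
- split.
  + by move=> x; rewrite in_itv/= => /andP[x0 _]; case: (@pw_derive s x x0).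
  + exact: pw_right0.
  + by apply: cvg_at_left_filter; apply: pw_cont.
- move=> x; rewrite in_itv/= => /andP[x0 _].
  by rewrite derive1E; case: (@pw_derive s x x0) => _ ->.
Qed.
Lemma split0y (s : R) (f : R -> R) : 0 < s -> measurable_fun setT f ->
  (forall x, 0 <= f x) ->
  (\int[mu]_(x in `[0%R, +oo[) (f x)%:E =
   \int[mu]_(x in `[0%R, s]) (f x)%:E + \int[mu]_(x in `[s, +oo[) (f x)%:E)%E.
Proof.
move=> s0 mf f0.
have mEf (D : set R) : measurable_fun D (EFin \o f).
  by apply/measurable_EFinP; apply: measurable_funS mf.
rewrite (@itv_bndbnd_setU _ _ (BLeft 0%R) (BRight s) +oo%O); last 2 first.
- by rewrite bnd_simp ltW.
- by [].
rewrite ge0_integral_setU //=.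
- by rewrite integral_itv_obnd_cbnd.
- by apply/measurable_EFinP; apply: measurable_funS mf.
- by move=> x _; rewrite lee_fin.
- rewrite disj_set2E; apply/eqP/seteqP; split => x //=.
  rewrite !in_itv/= => -[/andP[_ xs] /andP[sx _]].
  by move: (lt_le_trans sx xs); rewrite ltxx.
Qed.

Lemma Grec (s : R) : 1 < s ->
  (\int[mu]_(x in `[0%R, +oo[) (pw s x)%:E =
   s%:E * \int[mu]_(x in `[0%R, +oo[) (pw (s - 1) x)%:E)%E.
Proof.
move=> s1; have s0 : 0 < s by apply: lt_trans s1.
rewrite -ge0_integralZl_EFin //.
all: try solve [by move=> x _; rewrite lee_fin pw_ge0 | exact: mEpw | exact: ltW].
rewrite (@split0y s) //.
all: try solve [exact: measurable_pw | exact: pw_ge0].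
transitivity (\int[mu]_(x in `[0%R, +oo[) ((s * pw (s - 1) x)%:E))%E; last first.
  by apply: eq_integral => x _; rewrite EFinM.
rewrite (@split0y s (fun x => s * pw (s - 1) x)) //; last 2 first.
- by apply: measurable_funM => //; exact: measurable_pw.
- by move=> x; rewrite mulr_ge0 ?pw_ge0 ?ltW.
rewrite Gtail // Ghead //.
by rewrite -addeA [X in (_ + X)%E]addeC.
Qed.
Lemma Gamma_E (s : R) : Gamma s = fine (\int[mu]_(x in `[0%R, +oo[) (pw (s - 1) x)%:E)%E.
Proof.
rewrite /Gamma -integral_itv_obnd_cbnd //.
by apply/measurable_EFinP; apply: measurable_funS (measurable_pw (s - 1)).
Qed.

Lemma Gamma_rec (s : R) : 1 < s -> Gamma (s + 1) = s * Gamma s.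
Proof.
move=> s1; have s0 : 0 < s by apply: lt_trans s1.
rewrite !Gamma_E addrK Grec //.
set I := (\int[mu]_(x in _) _)%E.
have I0 : (0 <= I)%E by apply: integral_ge0 => x _; rewrite lee_fin pw_ge0.
have [Ifin|] := boolP (I \is a fin_num).
  by rewrite fineM.
rewrite ge0_fin_numE // -leNgt leye_eq => /eqP ->.
by rewrite gt0_muley ?lte_fin //= mulr0.
Qed.
Lemma pw32_le (x : R) : 0 <= x -> pw (3/2) x <= 16 * exponential_pdf (2^-1) x.
Proof.
move=> x0; rewrite exponential_pdfE //.
have h1 : x `^ (3/2) <= 1 + x ^+ 2.
  have [x1|x1] := leP x 1.
    apply: (@le_trans _ _ 1); last by rewrite lerDl sqr_ge0.
    rewrite [leRHS](_ : 1 = 1 `^ (3/2)); last by rewrite powR1.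
    apply: ge0_ler_powR; [lra | by rewrite nnegrE | by rewrite nnegrE | exact: x1].
  apply: (@le_trans _ _ (x ^+ 2)); last by rewrite lerDr.
  rewrite -powR_mulrn //; apply: ler_powR; first exact: ltW.
  lra.
have h2 : 1 + x ^+ 2 <= 8 * expR (2^-1 * x).
  have hx : 0 <= 2^-1 * x by rewrite mulr_ge0 // invr_ge0.
  have := expR_ge1Dxn 1 hx.
  rewrite exprMn /= => h. rewrite (_ : 2`!%:R = 2 :> R) // in h.
  have : 0 <= x ^+ 2 by rewrite sqr_ge0.
  lra.
rewrite /pw.
set E := expR (- 2^-1 * x).
have -> : expR (- x) = E * E.
  by rewrite -expRD; congr expR; lra.
have e0 : 0 < E := expR_gt0 _.
have EE : expR (2^-1 * x) * E = 1 by rewrite /E mulNr expRxMexpNx_1.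
have k : x `^ (3 / 2) * E <= 8.
  have : x `^ (3 / 2) * E <= 8 * expR (2^-1 * x) * E.
    by apply: ler_wpM2r; [exact: ltW | lra].
  by rewrite -mulrA EE mulr1.
rewrite mulrA.
have : x `^ (3 / 2) * E * E <= 8 * E by apply: ler_wpM2r => //; exact: ltW.
lra.
Qed.
Lemma I32_fin : (\int[mu]_(x in `[0%R, +oo[) (pw (3/2) x)%:E < +oo)%E.
Proof.
have r0 : (0 : R) < 2^-1 by rewrite invr_gt0.
pose q x := exponential_pdf (2^-1 : R) x.
have mq : measurable_fun setT q by exact: measurable_exponential_pdf.
have q0 x : 0 <= q x by apply: exponential_pdf_ge0; exact: ltW.
apply: (@le_lt_trans _ _ (\int[mu]_(x in `[0%R, +oo[) ((16 * q x)%:E))%E).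
  apply: ge0_le_integral => //.
  - by move=> x _; rewrite lee_fin pw_ge0.
  - by apply/measurable_EFinP; apply: measurable_funS (measurable_pw _).
  - apply/measurable_EFinP; apply: measurable_funS (measurable_funM _ mq) => //.
  - by move=> x; rewrite /= in_itv/= andbT => x0; rewrite lee_fin pw32_le.
under eq_integral do rewrite EFinM.
rewrite ge0_integralZl_EFin //.
all: try solve [by move=> x _; rewrite lee_fin | by apply/measurable_EFinP; apply: measurable_funS mq].
apply: (@le_lt_trans _ _ (16%:E * \int[mu]_x (q x)%:E))%E.
  rewrite lee_pmul2l //; apply: ge0_subset_integral => //.
  - by apply/measurable_EFinP.
  - by move=> x _; rewrite lee_fin.
by rewrite integral_exponential_pdf // mule1 ltry.
Qed.
Lemma I32_pos : (0 < \int[mu]_(x in `[0%R, +oo[) (pw (3/2) x)%:E)%E.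
Proof.
apply: (@lt_le_trans _ _ (\int[mu]_(x in `[1%R, 2%R]) (pw (3/2) x)%:E)%E); last first.
  apply: ge0_subset_integral => //.
  - by apply/measurable_EFinP; apply: measurable_funS (measurable_pw _).
  - by move=> x _; rewrite lee_fin pw_ge0.
  - by move=> x; rewrite /= !in_itv/= => /andP[x1 _]; rewrite (le_trans _ x1).
apply: (@lt_le_trans _ _ (\int[mu]_(x in `[1%R, 2%R]) (cst (expR (-2))%:E x))%E).
  rewrite integral_cst //. have := @lebesgue_measure_itv R `[1%R, 2%R]. rewrite /= ifT; last by rewrite lte_fin ltr1n. move=> ->.
  by rewrite -EFinD -EFinM lte_fin mulr_gt0 ?expR_gt0 // subr_gt0 ltr1n.
apply: ge0_le_integral => //.
- by move=> x _; rewrite lee_fin expR_ge0.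
- by apply/measurable_EFinP; apply: measurable_funS (measurable_pw _).
- move=> x; rewrite /= in_itv/= => /andP[x1 x2]; rewrite lee_fin /pw.
  rewrite -[leLHS]mul1r; apply: ler_pM; rewrite ?expR_ge0 //.
    rewrite -[leLHS](powRr0 x); apply: ler_powR => //; lra.
  by rewrite ler_expR lerN2.
Qed.
Lemma G52_pos : 0 < Gamma (5/2 : R).
Proof.
rewrite Gamma_E (_ : (5/2 : R) - 1 = 3/2); last lra.
apply: fine_gt0; rewrite I32_pos /=; exact: I32_fin.
Qed.

Lemma g_rec (j : nat) : rfact ((j.+1)%:R + 3/2 : R) = (j%:R + 5/2) * rfact (j%:R + 3/2 : R).
Proof.
rewrite /rfact.
have -> : (j.+1)%:R + 3/2 + 1 = (j%:R + 5/2) + 1 :> R by rewrite -natr1; lra.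
rewrite (@Gamma_rec (j%:R + 5/2)); last by have : (0 : R) <= j%:R by []; lra.
by congr (_ * Gamma _); lra.
Qed.

Lemma g_pos (j : nat) : 0 < rfact (j%:R + 3/2 : R).
Proof.
elim: j => [|j IH].
  by rewrite /rfact (_ : 0%:R + 3/2 + 1 = 5/2 :> R); [exact: G52_pos | lra].
rewrite g_rec mulr_gt0 //; have : (0 : R) <= j%:R by []; lra.
Qed.
End G.

Section C.
Variable R : realType.

Definition Ssum (n : nat) : R := \sum_(0 <= k < n) (('C(n, k))%:R ^+ 2 : R)^-1.

Lemma term (n k : nat) : (k < n.+1)%N ->
  let N := n%:R + 1 : R in
  let Gf := fun k : nat => N ^+ 2 * (2 * k%:R - 3 * n%:R - 6) / ('C(n.+1, k)%:R ^+ 2) in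
  Gf k.+1 - Gf k = 2 * (2 * n%:R + 5) * N ^+ 2 / ('C(n.+1, k)%:R ^+ 2)
                   - (n%:R + 2) ^+ 3 / ('C(n, k)%:R ^+ 2).
Proof.
move=> kn N Gf.
have kn' : (k <= n)%N by [].
set c : R := 'C(n, k)%:R.
have c0 : c != 0 by rewrite pnatr_eq0 -lt0n bin_gt0.
have e1 := mul_bin_down n.+1 k.
have e2 := mul_bin_diag n.+1 k.
have NK : N - k%:R != 0.
  rewrite /N subr_eq0; apply/negP => /eqP h.
  have : (k%:R : R) <= n%:R by rewrite ler_nat.
  lra.
have N0 : N != 0 by rewrite /N; apply/negP => /eqP h; have : (0 : R) <= n%:R by []; lra.
have K0 : (k%:R + 1 : R) != 0 by apply/negP => /eqP h; have : (0 : R) <= k%:R by []; lra.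
have ha : ('C(n.+1, k)%:R : R) = N * c / (N - k%:R).
  have := congr1 (fun m : nat => (m%:R : R)) e1 => /=.
  rewrite !natrM (natrB _ (ltnW kn)) -/c -natr1 -/N => ->.
  by rewrite -mulrA mulrCA mulfV ?mulr1.
have hb : ('C(n.+1, k.+1)%:R : R) = N * c / (k%:R + 1).
  have := congr1 (fun m : nat => (m%:R : R)) e2 => /=.
  rewrite !natrM -/c -!natr1 -/N => ->.
  by rewrite -mulrA mulrCA mulfV ?mulr1.
rewrite /Gf ha hb -[(k.+1)%:R]natr1.
move: NK N0 K0 c0; rewrite /N; clearbody c => NK N0 K0 c0.
by field; rewrite c0 NK N0 K0.
Qed.
Lemma Srec (n : nat) :
  2 * (2 * n%:R + 5) * (n%:R + 1) ^+ 2 * Ssum n.+1 =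
  (n%:R + 2) ^+ 3 * Ssum n + (3 * n%:R ^+ 3 + 12 * n%:R ^+ 2 + 18 * n%:R + 10).
Proof.
pose N := n%:R + 1 : R.
pose Gf := fun k : nat => N ^+ 2 * (2 * k%:R - 3 * n%:R - 6) / ('C(n.+1, k)%:R ^+ 2).
have tel := @telescope_sumr _ 0 n.+1 Gf (leq0n _).
have h : \sum_(0 <= k < n.+1) (2 * (2 * n%:R + 5) * N ^+ 2 / ('C(n.+1, k)%:R ^+ 2)
                   - (n%:R + 2) ^+ 3 / ('C(n, k)%:R ^+ 2)) = Gf n.+1 - Gf 0.
  rewrite -tel; apply: eq_big_nat => k /andP[_ kn].
  by have := @term n k kn => /= ->.
rewrite sumrB -!mulr_sumr (@big_nat_recr _ _ _ n 0 (fun k => (('C(n, k)%:R : R) ^+ 2)^-1)) //= binn expr1n invr1 in h.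
rewrite /Gf /= binn bin0 expr1n !divr1 in h.
rewrite /Ssum.
set S1 := \sum_(0 <= k < n.+1) _ in h *.
set S0 := \sum_(0 <= k < n) _ in h *.
have h' : 2 * (2 * n%:R + 5) * N ^+ 2 * S1 =
   N ^+ 2 * (2 * n.+1%:R - 3 * n%:R - 6) - N ^+ 2 * (2 * 0%:R - 3 * n%:R - 6)
   + (n%:R + 2) ^+ 3 * (S0 + 1).
  by rewrite -h subrK.
rewrite /N in h'; rewrite h' -natr1.
ring.
Qed.
End C.

Local Close Scope classical_set_scope.

Theorem theorem1 (R : realType) (n : nat) (hn : (0 < n)%N) :
  \sum_(0 <= k < n) (('C(n, k))%:R ^+ 2 : R)^-1 =
  (n.+1)`!%:R * (n.+1)%:R ^+ 2 / (rfact (n%:R + 3 / 2) * 4 ^+ n) *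
  \sum_(0 <= j < n)
    ((3 * j%:R ^+ 3 + 12 * j%:R ^+ 2 + 18 * j%:R + 10) * 4 ^+ j
       * rfact (j%:R + 3 / 2 : R)
     / ((j.+1)%:R ^+ 2 * (j.+1)`!%:R * (j.+2)%:R ^+ 3)).
Proof.
clear hn.
elim: n => [|n IH].
  by rewrite !big_geq // mulr0.
have n0 : (0 : R) <= n%:R by [].
have A0 : (2 * (2 * n%:R + 5) * (n%:R + 1) ^+ 2 : R) != 0.
  by apply: lt0r_neq0; rewrite !mulr_gt0 //.
apply: (mulfI A0).
have := Srec R n; rewrite /Ssum => ->.
rewrite IH (big_nat_recr n) //=.
rewrite g_rec.
have G0 := g_pos R n.
set G := rfact (n%:R + 3 / 2 : R) in G0 *.
set T := \sum_(0 <= j < n) _.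
have e1 : ((n.+1)%:R : R) = n%:R + 1 by rewrite natr1.
have e2 : ((n.+2)%:R : R) = n%:R + 2 by rewrite -addn2 natrD.
have F0 : ((n.+1)`!%:R : R) != 0 by rewrite pnatr_eq0 -lt0n fact_gt0.
rewrite [(n.+2)`!]factS natrM e1 e2 [(4 : R) ^+ n.+1]exprS.
set F := ((n.+1)`!%:R : R) in F0 *.
have G0' : G != 0 by rewrite gt_eqF.
have P0 : (4 : R) ^+ n != 0 by apply: lt0r_neq0; rewrite exprn_gt0.
set P := (4 : R) ^+ n in P0 *.
move: G0' P0 F0; clearbody G F T P => G0' P0 F0.
have h1 : (n%:R + 2 : R) != 0 by apply: lt0r_neq0; lra.
have h2 : (n%:R + 1 : R) != 0 by apply: lt0r_neq0; lra.
have h3 : (n%:R * 2 + 5 : R) != 0 by apply: lt0r_neq0; lra.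
by field; rewrite h1 F0 h2 P0 G0' h3.
Qed.
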